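(* Let $\omega_0>0$ and $\gamma>0$, and consider the control system on $SU(2)\times SU(2)$ $$\dot X_1(t)=-i\big(\omega_0 S_z+u_x(t)S_x+u_y(t)S_y+u_z(t)S_z\big)X_1(t),\qquad X_1(0)=I,$$ $$\dot X_2(t)=-i\big(-\omega_0 S_z+u_x(t)S_x+u_y(t)S_y+u_z(t)S_z\big)X_2(t),\qquad X_2(0)=I,$$ with admissible controls satisfying $u_x^2+u_y^2+u_z^2\le\gamma^2$ for all $t$. Let $X_f,\hat X_f\in SU(2)$ satisfy $\hat X_f=e^{i\varphi S_z}X_fe^{-i\varphi S_z}$ for some $\varphi\in\mathbb{R}$. Suppose an admissible control $(u_x,u_y,u_z)$ steers the system so that $X_1(t_f)=\pm X_f$ and $X_2(t_f)=\pm X_f$ (some choice of signs). Then there is an admissible control $(\hat u_x,\hat u_y,\hat u_z)$, with $\hat u_x^2+\hat u_y^2+\hat u_z^2\le\gamma^2$, that steers the system in the same time $t_f$ so that $X_1(t_f)=\pm\hat X_f$ and $X_2(t_f)=\pm\hat X_f$.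
   Context: $S_k=\frac12\sigma_k$ for $k=x,y,z$, where $\sigma_x,\sigma_y,\sigma_z$ are the Pauli matrices $\sigma_x=\begin{pmatrix}0&1\\1&0\end{pmatrix}$, $\sigma_y=\begin{pmatrix}0&-i\\i&0\end{pmatrix}$, $\sigma_z=\begin{pmatrix}1&0\\0&-1\end{pmatrix}$; $I$ is the $2\times 2$ identity. Controls are measurable real functions of time. *)

(* Defs.v *)
From mathcomp Require Import all_boot all_order all_algebra.
From mathcomp Require Import all_classical all_reals all_analysis.
From mathcomp Require Import complex.
Set Implicit Arguments. Unset Strict Implicit. Unset Printing Implicit Defensive.
Import GRing.Theory Num.Theory.
Local Open Scope ring_scope.
Local Open Scope complex_scope.

Definition sigma_x (R : realType) : 'M[R[i]]_2 :=
  \matrix_(i < 2, j < 2) (if i == j then 0 else 1).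
Definition sigma_y (R : realType) : 'M[R[i]]_2 :=
  \matrix_(i < 2, j < 2)
    (if i == j then 0 else if (val i == 0)%N then - 'i else 'i).
Definition sigma_z (R : realType) : 'M[R[i]]_2 :=
  \matrix_(i < 2, j < 2)
    (if i == j then (if (val i == 0)%N then 1 else -1) else 0).

Definition S_x (R : realType) : 'M[R[i]]_2 := 2^-1 *: sigma_x R.
Definition S_y (R : realType) : 'M[R[i]]_2 := 2^-1 *: sigma_y R.
Definition S_z (R : realType) : 'M[R[i]]_2 := 2^-1 *: sigma_z R.

Definition generator (R : realType) (w : R) (ux uy uz : R -> R) (t : R)
  : 'M[R[i]]_2 :=
  - 'i *: ((w%:C) *: S_z R + (ux t)%:C *: S_x R + (uy t)%:C *: S_y R
           + (uz t)%:C *: S_z R).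

Definition cintegrable (R : realType) (a b : R) (f : R -> R[i]) : Prop :=
  (lebesgue_measure).-integrable `[a, b] (EFin \o (fun s => @complex.Re R (f s))) /\
  (lebesgue_measure).-integrable `[a, b] (EFin \o (fun s => @complex.Im R (f s))).

Definition cintegral (R : realType) (a b : R) (f : R -> R[i]) : R[i] :=
  (Rintegral lebesgue_measure `[a, b] (fun s => @complex.Re R (f s)))
  +i* (Rintegral lebesgue_measure `[a, b] (fun s => @complex.Im R (f s))).

(* X is a (Caratheodory) solution on [0, tf] of  X' = A(t) X, X(0) = I,
   i.e. X(t) = I + \int_0^t A(s) X(s) ds entrywise, integrand integrable. *)
Definition is_solution (R : realType) (A : R -> 'M[R[i]]_2) (tf : R)
  (X : R -> 'M[R[i]]_2) : Prop :=
  forall t : R, 0 <= t <= tf -> forall i j : 'I_2,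
    cintegrable 0 t (fun s => (A s *m X s) i j) /\
    X t i j = (1 : 'M[R[i]]_2) i j + cintegral 0 t (fun s => (A s *m X s) i j).

Definition admissible (R : realType) (gamma : R) (ux uy uz : R -> R) : Prop :=
  measurable_fun setT ux /\ measurable_fun setT uy /\ measurable_fun setT uz /\
  forall t : R, ux t ^+ 2 + uy t ^+ 2 + uz t ^+ 2 <= gamma ^+ 2.

Definition adj_mx (R : realType) (X : 'M[R[i]]_2) : 'M[R[i]]_2 :=
  map_mx (@conjc R) X^T.
Definition SU2 (R : realType) (X : 'M[R[i]]_2) : Prop :=
  X *m adj_mx X = 1 /\ \det X = 1.

(* e^{i phi S_z} = diag(e^{i phi/2}, e^{-i phi/2}) (S_z is diagonal) *)
Definition expiSz (R : realType) (phi : R) : 'M[R[i]]_2 :=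
  \matrix_(i < 2, j < 2)
    (if i == j then
       (if (val i == 0)%N then cos (phi / 2) +i* sin (phi / 2)
        else cos (phi / 2) -i* sin (phi / 2))
     else 0).

(* Main.v *)
Require Import Defs.
From mathcomp Require Import all_boot all_order all_algebra.
From mathcomp Require Import all_classical all_reals all_analysis.
From mathcomp Require Import complex.
From mathcomp Require Import ring lra measurable_realfun.
Import GRing.Theory Num.Theory.
Local Open Scope ring_scope.
Local Open Scope complex_scope.

Section S.
Variable R : realType.
Local Notation cRe := (@complex.Re R).
Local Notation cIm := (@complex.Im R).
Lemma ReM (x y : R[i]) : cRe (x * y) = cRe x * cRe y - cIm x * cIm y.
Proof. by case: x => a b; case: y => c d; simpc. Qed.
Lemma ImM (x y : R[i]) : cIm (x * y) = cRe x * cIm y + cIm x * cRe y.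
Proof. by case: x => a b; case: y => c d; simpc. Qed.
Lemma ReD (x y : R[i]) : cRe (x + y) = cRe x + cRe y.
Proof. by case: x => a b; case: y => c d; simpc. Qed.
Lemma ImD (x y : R[i]) : cIm (x + y) = cIm x + cIm y.
Proof. by case: x => a b; case: y => c d; simpc. Qed.
Lemma ReN (x : R[i]) : cRe (- x) = - cRe x.
Proof. by case: x => a b; simpc. Qed.
Lemma ImN (x : R[i]) : cIm (- x) = - cIm x.
Proof. by case: x => a b; simpc. Qed.
Lemma cint_scale a b (k : R[i]) f : cintegrable a b f ->
  cintegrable a b (fun s => k * f s) /\
  cintegral a b (fun s => k * f s) = k * cintegral a b f.
Proof.
move=> [hr hi].
have mD : measurable (`[a, b] : set R) by exact: measurable_itv.
have hZ : forall (p : R) g, (lebesgue_measure).-integrable `[a, b] (EFin \o g) ->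
   (lebesgue_measure).-integrable `[a, b] (EFin \o (fun s => p * g s)).
  move=> p g hg.
  have -> : (EFin \o (fun s => p * g s)) = (fun x => (p%:E * (EFin \o g) x)%E).
    by apply/funext => s.
  exact: integrableZl.
have h1 : forall (p q : R), (lebesgue_measure).-integrable `[a, b]
   (EFin \o (fun s => p * cRe (f s) - q * cIm (f s))).
  move=> p q.
  have -> : (EFin \o (fun s => p * cRe (f s) - q * cIm (f s))) =
     (fun x => ((p * cRe (f x))%:E - (q * cIm (f x))%:E)%E).
    by apply/funext => s.
  by apply: integrableB => //; apply: hZ.
have h2 : forall (p q : R), (lebesgue_measure).-integrable `[a, b]
   (EFin \o (fun s => p * cIm (f s) + q * cRe (f s))).
  move=> p q.
  have -> : (EFin \o (fun s => p * cIm (f s) + q * cRe (f s))) =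
     (fun x => ((p * cIm (f x))%:E + (q * cRe (f x))%:E)%E).
    by apply/funext => s.
  by apply: integrableD => //; apply: hZ.
have eR : (fun s => cRe (k * f s)) = (fun s => cRe k * cRe (f s) - cIm k * cIm (f s)).
  by apply/funext => s; rewrite ReM.
have eI : (fun s => cIm (k * f s)) = (fun s => cRe k * cIm (f s) + cIm k * cRe (f s)).
  by apply/funext => s; rewrite ImM.
split.
  by split; rewrite /= ?eR ?eI; [exact: h1 | exact: h2].
rewrite /cintegral eR eI.
rewrite RintegralB //; try exact: hZ.
rewrite RintegralD //; try exact: hZ.
rewrite !RintegralZl //.
clear eR eI; case: k => p q; simpc => /=; congr (_ +i* _); ring.
Qed.

Lemma inv2C : (2^-1 : R[i]) = (2^-1 : R)%:C.
Proof. by rewrite fmorphV rmorph_nat. Qed.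
Lemma cext (x y : R[i]) : cRe x = cRe y -> cIm x = cIm y -> x = y.
Proof. by case: x => a b; case: y => c d /= -> ->. Qed.
Lemma Re1 : cRe 1 = 1. Proof. by []. Qed.
Lemma Im1 : cIm 1 = 0. Proof. by []. Qed.
Lemma Re0 : cRe 0 = 0. Proof. by []. Qed.
Lemma Im0 : cIm 0 = 0. Proof. by []. Qed.
Lemma ReC x : cRe x%:C = x. Proof. by []. Qed.
Lemma ImC x : cIm x%:C = 0. Proof. by []. Qed.

Definition o1 : 'I_2 := @Ordinal 2 1 isT.
Lemma ord2 (k : 'I_2) : k = ord0 \/ k = o1.
Proof. case: k => [[|[|//]]] H; [left|right]; exact/val_inj. Qed.

Ltac ceq := apply: cext; rewrite /= ?(ReM, ImM, ReD, ImD, ReN, ImN, ReC, ImC, Re1, Im1, Re0, Im0, inv2C) /=.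

Variable phi : R.
Local Notation c := (cos (phi / 2)).
Local Notation s := (sin (phi / 2)).
Local Notation U := (expiSz phi).
Local Notation V := (expiSz (- phi)).
Lemma U00 : U ord0 ord0 = c +i* s. Proof. by rewrite mxE. Qed.
Lemma U11 : U o1 o1 = c -i* s. Proof. by rewrite mxE. Qed.
Lemma U01 : U ord0 o1 = 0. Proof. by rewrite mxE. Qed.
Lemma U10 : U o1 ord0 = 0. Proof. by rewrite mxE. Qed.
Lemma V00 : V ord0 ord0 = c -i* s. Proof. by rewrite mxE /= mulNr cosN sinN. Qed.
Lemma V11 : V o1 o1 = c +i* s. Proof. by rewrite mxE /= mulNr cosN sinN opprK. Qed.
Lemma V01 : V ord0 o1 = 0. Proof. by rewrite mxE. Qed.
Lemma V10 : V o1 ord0 = 0. Proof. by rewrite mxE. Qed.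

Lemma cs1 : c ^+ 2 + s ^+ 2 = 1. Proof. exact: cos2Dsin2. Qed.

Lemma UV1 i : U i i * V i i = 1.
Proof.
have h := cs1.
case: (ord2 i) => ->; rewrite ?U00 ?V00 ?U11 ?V11; ceq; try ring; rewrite -[RHS]h; ring.
Qed.

Definition du (k : 'I_2) : R[i] := if val k == 0%N then c +i* s else c -i* s.
Definition dv (k : 'I_2) : R[i] := if val k == 0%N then c -i* s else c +i* s.

Lemma diagE (M : 'M[R[i]]_2) i j : (U *m M *m V) i j = du i * M i j * dv j.
Proof.
have hl : lift ord0 ord0 = o1 :> 'I_2 by apply/val_inj.
rewrite !mxE !big_ord_recl !big_ord0 !mxE !big_ord_recl !big_ord0 hl /du /dv.
case: (ord2 i) => ->; case: (ord2 j) => ->; rewrite /= !mulNr !cosN !sinN ?opprK ?U00 ?U01 ?U10 ?U11; ceq; ring.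
Qed.

Lemma dudv i : du i * dv i = 1.
Proof.
have h := cs1.
case: (ord2 i) => ->; rewrite /du /dv /=; ceq; try ring; rewrite -[RHS]h; ring.
Qed.

Lemma use_cs (A B : R) : B = (c ^+ 2 + s ^+ 2) * A -> A = B.
Proof. by rewrite cs1 mul1r => ->. Qed.

Lemma use_cs2 (A B : R) : A = (c ^+ 2 + s ^+ 2) * B -> A = B.
Proof. by rewrite cs1 mul1r => ->. Qed.

Ltac csring := (ring || (apply: use_cs; ring) || (apply: use_cs2; ring)).

Lemma VU1 : V *m U = 1.
Proof.
apply/matrixP => i j.
have hl : lift ord0 ord0 = o1 :> 'I_2 by apply/val_inj.
rewrite !mxE !big_ord_recl !big_ord0 hl.
case: (ord2 i) => ->; case: (ord2 j) => ->;
  rewrite /= ?V00 ?V01 ?V10 ?V11 ?U00 ?U01 ?U10 ?U11; ceq; csring.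
Qed.

Lemma genE w (ux uy uz : R -> R) t i j : generator w ux uy uz t i j =
  - 'i * (w%:C * (2^-1 * (if i == j then if \val i == 0%N then 1 else -1 else 0))
     + (ux t)%:C * (2^-1 * (if i == j then 0 else 1))
     + (uy t)%:C * (2^-1 * (if i == j then 0 else if \val i == 0%N then - 'i else 'i))
     + (uz t)%:C * (2^-1 * (if i == j then if \val i == 0%N then 1 else -1 else 0))).
Proof. by rewrite /generator /S_x /S_y /S_z !mxE. Qed.

Definition Cc := c * c - s * s.
Definition Sc := 2 * c * s.

Lemma gen_rot w ux uy uz t :
  generator w (fun t => Cc * ux t + Sc * uy t) (fun t => - Sc * ux t + Cc * uy t) uz t
  = U *m generator w ux uy uz t *m V.
Proof.
apply/matrixP => i j; rewrite [RHS]diagE !genE /Cc /Sc /du /dv inv2C.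
case: (ord2 i) => ->; case: (ord2 j) => ->; rewrite /=; ceq; csring.

Qed.
End S.

Arguments Cc {R}.
Arguments Sc {R}.
Arguments du {R}.
Arguments dv {R}.
Arguments dudv {R}.
Arguments diagE {R}.
Arguments VU1 {R}.
Arguments gen_rot {R}.

Lemma oneE (R : realType) (i j : 'I_2) : (1 : 'M[R[i]]_2) i j = (i == j)%:R.
Proof. by rewrite mxE. Qed.

Lemma sol_rot (R : realType) (phi w tf : R) (ux uy uz : R -> R) (X : R -> 'M[R[i]]_2) :
  is_solution (generator w ux uy uz) tf X ->
  is_solution (generator w (fun t => Cc phi * ux t + Sc phi * uy t)
     (fun t => - Sc phi * ux t + Cc phi * uy t) uz) tf
     (fun t => expiSz phi *m X t *m expiSz (- phi)).
Proof.
move=> hX t ht i j; have [hint heq] := hX t ht i j.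
have ef : (fun s => (generator w (fun t => Cc phi * ux t + Sc phi * uy t)
     (fun t => - Sc phi * ux t + Cc phi * uy t) uz s *m
     (expiSz phi *m X s *m expiSz (- phi))) i j) =
   (fun s => (du phi i * dv phi j) * (generator w ux uy uz s *m X s) i j).
  apply/funext => s; rewrite gen_rot !mulmxA.
  rewrite -(mulmxA (expiSz phi *m generator w ux uy uz s) (expiSz (- phi)) (expiSz phi)).
  rewrite VU1 mulmx1 -(mulmxA (expiSz phi) (generator w ux uy uz s) (X s)) diagE.
  by rewrite mulrAC mulrC.
have [h1 h2] := @cint_scale R _ _ (du phi i * dv phi j) _ hint.
split; rewrite ef //.
rewrite h2 diagE heq oneE.
case: (eqVneq i j) => [<-|nij].
  have h := dudv phi i.
  rewrite ?eqxx.
  transitivity ((du phi i * dv phi i) * (true%:R + cintegral 0 t (fun s => (generator w ux uy uz s *m X s) i i))); first ring.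
  by rewrite h !mul1r.
rewrite /= !add0r; ring.
Qed.

Theorem proposition1 (R : realType) (w0 gamma : R)
  (hw0 : 0 < w0) (hgamma : 0 < gamma)
  (Xf Xfh : 'M[R[i]]_2) (phi : R)
  (hXf : SU2 Xf) (hXfh : SU2 Xfh)
  (hphi : Xfh = expiSz phi *m Xf *m expiSz (- phi))
  (tf : R) (htf : 0 <= tf)
  (ux uy uz : R -> R) (hu : admissible gamma ux uy uz)
  (X1 X2 : R -> 'M[R[i]]_2)
  (hX1 : is_solution (generator w0 ux uy uz) tf X1)
  (hX2 : is_solution (generator (- w0) ux uy uz) tf X2)
  (hX1f : X1 tf = Xf \/ X1 tf = - Xf)
  (hX2f : X2 tf = Xf \/ X2 tf = - Xf) :
  exists hux huy huz : R -> R,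
    admissible gamma hux huy huz /\
    exists Y1 Y2 : R -> 'M[R[i]]_2,
      is_solution (generator w0 hux huy huz) tf Y1 /\
      is_solution (generator (- w0) hux huy huz) tf Y2 /\
      (Y1 tf = Xfh \/ Y1 tf = - Xfh) /\
      (Y2 tf = Xfh \/ Y2 tf = - Xfh).
Proof.
exists (fun t => Cc phi * ux t + Sc phi * uy t),
  (fun t => - Sc phi * ux t + Cc phi * uy t), uz.
have [mx [my [mz hb]]] := hu.
split.
  split.
    by apply: measurable_funD; apply: measurable_funM => //; exact: measurable_cst.
  split.
    by apply: measurable_funD; apply: measurable_funM => //; exact: measurable_cst.
  split => // t.
  have e : Cc phi ^+ 2 + Sc phi ^+ 2 = 1.
    transitivity ((cos (phi / 2) ^+ 2 + sin (phi / 2) ^+ 2) ^+ 2).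
      by rewrite /Cc /Sc; ring.
    by rewrite cos2Dsin2 expr1n.
  have -> : (Cc phi * ux t + Sc phi * uy t) ^+ 2 + (- Sc phi * ux t + Cc phi * uy t) ^+ 2
     + uz t ^+ 2 = (Cc phi ^+ 2 + Sc phi ^+ 2) * (ux t ^+ 2 + uy t ^+ 2) + uz t ^+ 2 by ring.
  by rewrite e mul1r; exact: hb.
exists (fun t => expiSz phi *m X1 t *m expiSz (- phi)),
  (fun t => expiSz phi *m X2 t *m expiSz (- phi)).
split; first exact: sol_rot.
split; first exact: sol_rot.
split.
  by case: hX1f => ->; [left; rewrite hphi | right; rewrite hphi mulmxN mulNmx].
by case: hX2f => ->; [left; rewrite hphi | right; rewrite hphi mulmxN mulNmx].
Qed.
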